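(* Let $q$ be a prime power and let $M$ be a simple matroid representable over $GF(q)$ that has no coloops and has two distinct loose elements $e$ and $f$. Then $r(M)\le 2q$, or $\{e,f\}$ is a cocircuit of $M$.
   Context: All matroids are finite. An element $t$ of a matroid $M$ is loose if every circuit of $M$ containing $t$ has size at least the rank $r(M)$. *)

(* Defs.v *)
From mathcomp Require Import all_boot all_order all_algebra all_field.
Set Implicit Arguments. Unset Strict Implicit. Unset Printing Implicit Defensive.

Record matroid (E : finType) := Matroid {
  indep : {set E} -> bool;
  indep0 : indep set0;
  indep_sub : forall A B : {set E}, A \subset B -> indep B -> indep A;
  indep_aug : forall A B : {set E}, indep A -> indep B -> #|A| < #|B| ->
      exists2 x, x \in B :\: A & indep (x |: A)
}.

Section Matroid.
Variables (E : finType) (M : matroid E).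

Definition rank (A : {set E}) : nat :=
  \max_(B : {set E} | indep M B && (B \subset A)) #|B|.

Definition rk : nat := rank setT.

Definition basis (B : {set E}) : Prop :=
  indep M B /\ forall x, x \notin B -> ~~ indep M (x |: B).

Definition circuit (C : {set E}) : Prop :=
  ~~ indep M C /\ forall D : {set E}, D \proper C -> indep M D.

(* independent sets of the dual matroid M^* : complement spans M *)
Definition coindep (A : {set E}) : bool := rank (~: A) == rk.

Definition cocircuit (C : {set E}) : Prop :=
  ~~ coindep C /\ forall D : {set E}, D \proper C -> coindep D.

Definition coloop (e : E) : Prop := forall B, basis B -> e \in B.

(* simple: no loops and no parallel pairs, i.e. every circuit has size >= 3 *)
Definition simple : Prop := forall C, circuit C -> 2 < #|C|.

Definition loose (t : E) : Prop :=
  forall C, circuit C -> t \in C -> rk <= #|C|.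

Definition representable_over (F : fieldType) : Prop :=
  exists (n : nat) (v : E -> 'rV[F]_n),
    forall A : {set E}, indep M A = free [seq v x | x <- enum A].

Definition GF_representable (q : nat) : Prop :=
  exists F : finFieldType, #|F| = q /\ representable_over F.

End Matroid.

Definition prime_power (q : nat) : Prop :=
  exists p k : nat, [/\ prime p, 0 < k & q = p ^ k].

(* Main.v *)
Require Import Defs.
From mathcomp Require Import all_boot all_order all_algebra all_field.
From mathcomp Require Import zify.

Lemma rank_ge (E : finType) (M : matroid E) (A X : {set E}) :
  indep M A -> A \subset X -> #|A| <= rank M X.
Proof. by move=> hA hX; rewrite /rank; apply: (@leq_bigmax_cond _ (fun B : {set E} => indep M B && (B \subset X)) (fun B : {set E} => #|B|)); rewrite hA hX. Qed.

Lemma rank_mono (E : finType) (M : matroid E) (X Y : {set E}) :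
  X \subset Y -> rank M X <= rank M Y.
Proof.
move=> hXY; rewrite {1}/rank; apply/bigmax_leqP => B /andP[hB hBX].
by apply: rank_ge => //; apply: subset_trans hXY.
Qed.

Lemma rank_le_rk (E : finType) (M : matroid E) (X : {set E}) : rank M X <= rk M.
Proof. by apply: rank_mono; apply: subsetT. Qed.

Lemma rank_att (E : finType) (M : matroid E) (X : {set E}) :
  exists B, [/\ indep M B, B \subset X & #|B| = rank M X].
Proof.
have h0 : 0 < #|[pred B : {set E} | indep M B && (B \subset X)]|.
  by apply/card_gt0P; exists set0; rewrite inE indep0 sub0set.
have [B hB hmax] := eq_bigmax_cond (fun B : {set E} => #|B|) h0.
move: hB; rewrite inE => /andP[h1 h2]; exists B; split => //.
Qed.

Lemma basis_card (E : finType) (M : matroid E) (B : {set E}) :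
  basis M B -> #|B| = rk M.
Proof.
case=> hB hmax; apply/eqP; rewrite eqn_leq rank_ge ?subsetT //=.
have [A [hA _ hAr]] := @rank_att _ M setT; rewrite /rk -hAr.
rewrite leqNgt; apply/negP => hlt.
have [x /setDP[xA xB] hx] := indep_aug hB hA hlt.
by move: (hmax x xB); rewrite hx.
Qed.

Lemma circuit_ex (E : finType) (M : matroid E) (D : {set E}) :
  ~~ indep M D -> exists C, circuit M C /\ C \subset D.
Proof.
move=> hD.
have hP : (~~ indep M D) && (D \subset D) by rewrite hD subxx.
case: (@arg_minnP _ D (fun C : {set E} => ~~ indep M C && (C \subset D)) (fun C : {set E} => #|C|) hP) => C /andP[hC hCD] hmin.
exists C; split => //; split => // D' hD'.
apply/negPn/negP => hn.
have := hmin D'; rewrite hn (subset_trans (proper_sub hD') hCD) => /(_ isT).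
by rewrite leqNgt proper_card.
Qed.

Lemma coindep_single (E : finType) (M : matroid E) (x : E) :
  ~ coloop M x -> coindep M [set x].
Proof.
move=> hx; apply/negPn/negP => hn; apply: hx => B hB.
apply/negPn/negP => xB; move/negP: hn; apply.
rewrite /coindep eqn_leq rank_le_rk -(@basis_card _ M B hB) rank_ge //; first by case: hB.
by apply/subsetP => y yB; rewrite !inE; apply: contraNneq xB => <-.
Qed.

Lemma coindep_sub (E : finType) (M : matroid E) (D D' : {set E}) :
  D \subset D' -> coindep M D' -> coindep M D.
Proof.
move=> h; rewrite /coindep !eqn_leq !rank_le_rk /= => h'.
by apply: leq_trans h' _; apply: rank_mono; rewrite setCS.
Qed.

Lemma cocirc_ef (E : finType) (M : matroid E) (e f : E) :
  (forall x : E, ~ coloop M x) -> ~~ coindep M [set e; f] -> cocircuit M [set e; f].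
Proof.
move=> hc hn; split => // D hD.
have hsub := proper_sub hD.
case eD: (e \in D).
  case fD: (f \in D).
    exfalso; move/properP: hD => [_ [y]]; rewrite !inE => /orP[] /eqP -> ; by rewrite ?eD ?fD.
  apply: (@coindep_sub _ M D [set e]); last exact: coindep_single.
  apply/subsetP => y yD; move/subsetP: hsub => /(_ y yD); rewrite !inE => /orP[] // /eqP hy.
  by subst y; rewrite yD in fD.
apply: (@coindep_sub _ M D [set f]); last exact: coindep_single.
apply/subsetP => y yD; move/subsetP: hsub => /(_ y yD); rewrite !inE => /orP[] // /eqP hy.
by subst y; rewrite yD in eD.
Qed.

Import GRing.Theory.

Lemma enum_U1_perm (E : finType) (x : E) (A : {set E}) :
  x \notin A -> perm_eq (enum (x |: A)) (x :: enum A).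
Proof.
move=> xA; apply: uniq_perm; first exact: enum_uniq.
  by rewrite /= mem_enum xA enum_uniq.
by move=> y; rewrite mem_enum in_setU1 inE mem_enum.
Qed.

Lemma dep_core (E : finType) (M : matroid E) (e f : E) (B D : {set E}) :
  loose M e -> loose M f -> indep M B -> D \subset e |: (f |: B) ->
  ~~ indep M D -> rk M <= #|D|.
Proof.
move=> le lf hB hD hn.
have [C [hC hCD]] := @circuit_ex _ M D hn.
have hCD' : #|C| <= #|D| by apply: subset_leq_card.
case eC: (e \in C); first by apply: leq_trans hCD'; apply: le.
case fC: (f \in C); first by apply: leq_trans hCD'; apply: lf.
exfalso; case: hC => /negP hC _; apply: hC; apply: (indep_sub _ hB).
apply/subsetP => y yC; move/subsetP: (subset_trans hCD hD) => /(_ y yC).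
rewrite !inE => /orP[/eqP hy|/orP[/eqP hy|//]]; subst y; by rewrite ?eC ?fC in yC.
Qed.

Section Main.
Variables (E : finType) (M : matroid E) (e f : E) (F : finFieldType) (n : nat)
  (v : E -> 'rV[F]_n).
Hypothesis hv : forall A : {set E}, indep M A = free [seq v x | x <- enum A].

Lemma indep_U1 (x : E) (A : {set E}) : x \notin A ->
  indep M (x |: A) = (v x \notin <<[seq v y | y <- enum A]>>%VS) && indep M A.
Proof.
move=> xA; rewrite !hv (perm_free (perm_map v (@enum_U1_perm _ x A xA))) /=.
by rewrite free_cons.
Qed.

Lemma core (q : nat) (B : {set E}) :
  e != f -> loose M e -> loose M f -> indep M B -> B \subset ~: [set e; f] ->
  #|B| = rk M -> #|F| = q -> rk M <= 2 * q.
Proof.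
move=> ef le lf hB hBef hBr hq.
have eB : e \notin B by apply/negP => /(subsetP hBef); rewrite !inE eqxx.
have fB : f \notin B by apply/negP => /(subsetP hBef); rewrite !inE eqxx orbT.
have hq1 : 0 < q by rewrite -hq; apply/card_gt0P; exists 0%R.
have hdep := fun D => @dep_core _ M e f B D le lf hB.
set s := enum B.
have spanx : forall x, x \notin B -> v x \in <<[seq v y | y <- s]>>%VS.
  move=> x xB; apply/negPn/negP => hn.
  have hi : indep M (x |: B) by rewrite indep_U1 // hn hB.
  move: (@rank_ge _ M _ _ hi (subsetT _)); rewrite cardsU1 xB hBr /rk; lia.
set X := in_tuple [seq v y | y <- s].
set r := size [seq v y | y <- s].
have hr : r = rk M by rewrite /r size_map -cardE hBr.
pose bi := fun i : 'I_r => nth e s i.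
have hXi : forall i : 'I_r, (X`_i)%R = v (bi i).
  by move=> i; rewrite /= (nth_map e) // -(size_map v) ltn_ord.
have hbiB : forall i, bi i \in B.
  by move=> i; rewrite -mem_enum mem_nth // -(size_map v) ltn_ord.
have hsum : forall (k : 'I_r -> F) (A : {set E}), (forall i, k i != 0%R -> bi i \in A) ->
    (\sum_i k i *: X`_i)%R \in <<[seq v y | y <- enum A]>>%VS.
  move=> k A hk; apply: memv_suml => i _; case: (eqVneq (k i) 0%R) => [->|hki].
    by rewrite scale0r mem0v.
  apply: memvZ; rewrite hXi; apply: memv_span; apply: map_f; rewrite mem_enum; exact: hk.
pose a := fun i : 'I_r => (coord X i (v e) : F).
pose c := fun i : 'I_r => (coord X i (v f) : F).
have ha : v e = (\sum_i a i *: X`_i)%R := @coord_span _ _ _ X _ (spanx e eB).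
have hc : v f = (\sum_i c i *: X`_i)%R := @coord_span _ _ _ X _ (spanx f fB).
have nimg : forall x (I : {set 'I_r}), x \notin B -> x \notin [set bi i | i in I].
  move=> x I xB; apply/imsetP => -[i _ hi]; move: (hbiB i); rewrite -hi.
  by rewrite (negbTE xB).
pose Za := [set i | a i != 0%R].
pose Zc := [set i | c i != 0%R].
have hZa : rk M <= 1 + #|Za|.
  pose D := e |: [set bi i | i in Za].
  apply: (@leq_trans #|D|).
    apply: hdep.
      apply/subsetP => y; rewrite /D in_setU1; case/orP => [/eqP->|/imsetP[i _ ->]]; first by rewrite setU11.
      by rewrite !in_setU1 hbiB !orbT.
    rewrite /D indep_U1; last exact: nimg.
    rewrite {1}ha hsum //= => i hi; apply: imset_f; by rewrite inE.
  by rewrite /D cardsU1 nimg // add1n ltnS leq_imset_card.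
have hZc : rk M <= 1 + #|Zc|.
  pose D := f |: [set bi i | i in Zc].
  apply: (@leq_trans #|D|).
    apply: hdep.
      apply/subsetP => y; rewrite /D in_setU1; case/orP => [/eqP->|/imsetP[i _ ->]].
        by rewrite !in_setU1 eqxx orbT.
      by rewrite !in_setU1 hbiB !orbT.
    rewrite /D indep_U1; last exact: nimg.
    rewrite {1}hc hsum //= => i hi; apply: imset_f; by rewrite inE.
  by rewrite /D cardsU1 nimg // add1n ltnS leq_imset_card.
pose Z := Za :&: Zc.
have hZ : rk M <= #|Z| + 2.
  have := cardsUI Za Zc; have := max_card (Za :|: Zc); rewrite card_ord -/Z => h1 h2.
  move: hZa hZc; rewrite -hr; lia.
rewrite leqNgt; apply/negP => hlt.
pose p := fun i => (a i / c i)%R.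
pose K := fun l => [set i in Z | p i == l].
have [l hl] : exists l, 2 < #|K l|.
  case: (boolP [exists l, 2 < #|K l|]) => [/existsP//|hno]; exfalso.
  have hall : forall l, #|K l| <= 2.
    by move=> l; move/existsPn: hno => /(_ l); rewrite -leqNgt.
  have : #|Z| <= #|[pred l : F | l != 0%R]| * 2.
    rewrite -sum1_card (partition_big p (fun l => l != 0%R)) /=; last first.
      move=> i; rewrite !inE => /andP[ai ci].
      by rewrite /p mulf_neq0 ?invr_neq0.
    rewrite -sum_nat_const; apply: leq_sum => l _.
    by rewrite sum1dep_card; apply: hall.
  rewrite (@eq_card _ _ (predC1 0%R)) // cardC1 hq; lia.
pose I := [set i | (a i - l * c i != 0)%R].
have hIK : #|I| + #|K l| <= r.
  have := cardsC (K l); rewrite card_ord => hcK.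
  suff : #|I| <= #|~: K l| by lia.
  apply: subset_leq_card.
  apply/subsetP => i; rewrite !inE; apply: contraNN => /andP[/andP[_ ci] /eqP hp].
  by rewrite -hp /p divfK ?subrr.
pose D := e |: (f |: [set bi i | i in I]).
have eD : e \notin f |: [set bi i | i in I].
  by rewrite in_setU1 negb_or ef nimg.
have hD : rk M <= #|D|.
  apply: hdep.
    apply/subsetP => y; rewrite /D !in_setU1; case/orP => [->//|]; case/orP => [->|/imsetP[i _ ->]].
      by rewrite orbT.
    by rewrite hbiB !orbT.
  rewrite /D indep_U1 //.
  have -> : v e = (l *: v f + \sum_i (a i - l * c i) *: X`_i)%R.
    rewrite {1}ha {1}hc scaler_sumr -big_split /=; apply: eq_bigr => i _.
    by rewrite scalerA -scalerDl addrC subrK.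
  rewrite memvD //.
    apply: memvZ; apply: memv_span; apply: map_f; rewrite mem_enum; exact: setU11.
  apply: hsum => i hi; by rewrite in_setU1 imset_f ?orbT // inE.
have : #|D| <= 2 + #|I|.
  rewrite /D cardsU1 eD add1n -addn1 addnC add1n ltnS.
  by rewrite cardsU1 -add1n; apply: leq_add (leq_b1 _) (leq_imset_card _ _).
lia.
Qed.

End Main.

Theorem theorem4p1 (q : nat) (E : finType) (M : matroid E) (e f : E) :
  prime_power q ->
  GF_representable M q ->
  simple M ->
  (forall x : E, ~ coloop M x) ->
  e != f -> loose M e -> loose M f ->
  rk M <= 2 * q \/ cocircuit M [set e; f].
Proof.
move=> _ [F [hq [n [v hv]]]] _ hcol ef le lf.
case: (boolP (coindep M [set e; f])) => hco; last by right; apply: cocirc_ef.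
left; have [B [hB hBs hBr]] := @rank_att _ M (~: [set e; f]).
move: hco; rewrite /coindep => /eqP hr.
apply: (@core E M e f F n v hv q B ef le lf hB hBs _ hq).
by rewrite hBr hr.
Qed.
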